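(* Let $\mathcal{P}=(P_1,\dots,P_n)$ be convex polytopes in $\mathbb{R}^d$ each containing the origin, let $\mu\in\mathbb{R}^d$, and let $\Delta=\Delta(\mathcal{P};\mu)$. Suppose there is a line $\ell$ through $\mu$ that does not intersect $P_\sigma$ for any $\sigma\in\Delta$. Then $\mathrm{ctd}(\Delta)<d$.
   Context: For $\sigma\subseteq[n]$ write $P_\sigma=\sum_{i\in\sigma}P_i$ (Minkowski sum), with $P_\emptyset=\{0\}$; the Minkowski complex $\Delta(\mathcal{P};\mu)$ is the simplicial complex on vertex set $[n]$ whose faces are the $\sigma\subseteq[n]$ with $\mu\notin P_\sigma$. The convex threshold dimension $\mathrm{ctd}(\Delta)$ of a simplicial complex $\Delta$ on vertex set $[n]$ is the smallest $d$ such that $\Delta=\Delta(\mathcal{Q};\nu)$ for some family $\mathcal{Q}=(Q_1,\dots,Q_n)$ of convex bodies (equivalently, convex polytopes) in $\mathbb{R}^d$ containing the origin and some $\nu\in\mathbb{R}^d$. *)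

(* Defs.v *)
From HB Require Import structures.
From mathcomp Require Import all_boot all_order all_algebra.
From mathcomp Require Import reals.
Set Implicit Arguments. Unset Strict Implicit. Unset Printing Implicit Defensive.
Import Order.TTheory GRing.Theory Num.Theory.
Local Open Scope ring_scope.

Definition conv_hull (R : realType) (d : nat) (s : seq 'rV[R]_d) : 'rV[R]_d -> Prop :=
  fun x => exists w : 'I_(size s) -> R,
    (forall i, 0 <= w i) /\ \sum_(i < size s) w i = 1 /\
    x = \sum_(i < size s) w i *: s`_i.

Definition is_polytope (R : realType) (d : nat) (P : 'rV[R]_d -> Prop) : Prop :=
  exists s : seq 'rV[R]_d, forall x, P x <-> conv_hull s x.

(* Minkowski sum P_sigma = sum_{i in sigma} P_i, with P_emptyset = {0}. *)
Definition mink_sum (R : realType) (d n : nat) (P : 'I_n -> 'rV[R]_d -> Prop)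
  (sigma : {set 'I_n}) : 'rV[R]_d -> Prop :=
  fun x => exists y : 'I_n -> 'rV[R]_d,
    (forall i, i \in sigma -> P i (y i)) /\ x = \sum_(i in sigma) y i.

Definition mink_face (R : realType) (d n : nat) (P : 'I_n -> 'rV[R]_d -> Prop)
  (mu : 'rV[R]_d) (sigma : {set 'I_n}) : Prop :=
  ~ mink_sum P sigma mu.

Definition mink_representable (R : realType) (n : nat)
  (Delta : {set 'I_n} -> Prop) (e : nat) : Prop :=
  exists (Q : 'I_n -> 'rV[R]_e -> Prop) (nu : 'rV[R]_e),
    (forall i, is_polytope (Q i) /\ Q i 0) /\
    (forall sigma, Delta sigma <-> mink_face Q nu sigma).

(* ctd(Delta) < d  iff  Delta is representable in some dimension e < d. *)
Definition ctd_lt (R : realType) (n : nat) (Delta : {set 'I_n} -> Prop) (d : nat) : Prop :=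
  exists e : nat, (e < d)%N /\ mink_representable R Delta e.

(* Main.v *)
Require Import Defs.
From HB Require Import structures.
From mathcomp Require Import all_boot all_order all_algebra.
From mathcomp Require Import reals.
From mathcomp Require Import ring.
Import Order.TTheory GRing.Theory Num.Theory.
Local Open Scope ring_scope.

Section Proj.
Variables (R : realType) (e : nat) (k : 'I_e.+1) (v : 'rV[R]_e.+1).

Definition fp (x : 'rV[R]_e.+1) : 'rV[R]_e :=
  \row_j (x 0 (lift k j) - x 0 k / v 0 k * v 0 (lift k j)).

Lemma fpD x y : fp (x + y) = fp x + fp y.
Proof. apply/rowP => j; rewrite !mxE; ring. Qed.

Lemma fpZ a x : fp (a *: x) = a *: fp x.
Proof. apply/rowP => j; rewrite !mxE; ring. Qed.

Lemma fp0 : fp 0 = 0.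
Proof. by rewrite -(scale0r 0) fpZ scale0r. Qed.

Lemma fpB x y : fp (x - y) = fp x - fp y.
Proof. by rewrite fpD -scaleN1r fpZ scaleN1r. Qed.

Lemma fp_ker x : v 0 k != 0 -> fp x = 0 -> x = (x 0 k / v 0 k) *: v.
Proof.
move=> hk h; apply/matrixP => i j; rewrite ord1 mxE.
case: (unliftP k j) => [j' ->|->].
  have := congr1 (fun A : 'rV[R]_e => A 0 j') h; rewrite !mxE => /eqP.
  by rewrite subr_eq0 => /eqP.
by rewrite divfK.
Qed.

End Proj.

Lemma sum_cast (V : nmodType) m m' (E : m' = m) (F : 'I_m -> V) :
  \sum_(i < m') F (cast_ord E i) = \sum_(i < m) F i.
Proof. subst; apply: eq_bigr => i _; by rewrite cast_ord_id. Qed.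
Arguments sum_cast {V m m'}.


Theorem lemma6 (R : realType) (d n : nat) (P : 'I_n -> 'rV[R]_d -> Prop)
  (mu : 'rV[R]_d) :
  (forall i, is_polytope (P i) /\ P i 0) ->
  (exists v : 'rV[R]_d, v != 0 /\
     forall sigma : {set 'I_n}, mink_face P mu sigma ->
       forall t : R, ~ mink_sum P sigma (mu + t *: v)) ->
  ctd_lt R (mink_face P mu) d.
Proof.
move=> HP [v [hv Hl]].
case: d P mu v hv Hl HP => [|e] P mu v hv Hl HP.
  by rewrite thinmx0 eqxx in hv.
have [k hk] : exists k, v 0 k != 0.
  have : [exists k, v 0 k != 0].
    apply: contraNT hv => /existsPn H; apply/eqP/matrixP => i j.
    by rewrite ord1 mxE; apply/eqP; rewrite -[_ == _]negbK H.
  by move/existsP.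
pose f := @fp R e k v.
have fsum : forall (r : seq 'I_n) (Pr : pred 'I_n) (F : 'I_n -> 'rV[R]_e.+1),
    f (\sum_(i <- r | Pr i) F i) = \sum_(i <- r | Pr i) f (F i).
  move=> r Pr F; exact: (big_morph f (@fpD R e k v) (@fp0 R e k v)).
exists e; split; first by [].
exists (fun i y => exists x, P i x /\ y = f x), (f mu); split.
  move=> i0; have [[s Hs] Hi0] := HP i0; split; last by exists 0; rewrite /f fp0.
  exists (map f s) => y; split.
    move=> [x [/Hs [w [w0 [w1 ->]]]] ->].
    exists (fun i => w (cast_ord (size_map f s) i)); split => //; split.
      by rewrite sum_cast.
    rewrite /f (big_morph _ (@fpD R e k v) (@fp0 R e k v)).
    rewrite -(sum_cast (size_map f s)); apply: eq_bigr => i _.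
    by rewrite fpZ (nth_map 0) // -(size_map f s).
  move=> [w [w0 [w1 ->]]].
  have E : size s = size (map f s) by rewrite size_map.
  exists (\sum_(i < size s) w (cast_ord E i) *: s`_i); split.
    apply/Hs; exists (fun i => w (cast_ord E i)); split => //; split => //.
    by rewrite sum_cast.
  rewrite /f (big_morph _ (@fpD R e k v) (@fp0 R e k v)) -(sum_cast E).
  apply: eq_bigr => i _; rewrite fpZ (nth_map 0) //.
  by case: i => i hi.
move=> sigma; split.
  move=> Hf [y [Hy Hsum]].
  have : forall i, exists x, i \in sigma -> P i x /\ y i = f x.
    move=> i; case: (boolP (i \in sigma)) => hi.
      by have [x [Px ->]] := Hy i hi; exists x.
    by exists 0.
  move/boolp.choice => [x Hx].
  have hk' : f (\sum_(i in sigma) x i - mu) = 0.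
    rewrite /f fpB -/f fsum Hsum; apply/eqP; rewrite subr_eq0; apply/eqP.
    by apply: eq_bigr => i hi; have [_ ->] := Hx i hi.
  have := @fp_ker R e k v _ hk hk'; set t := (_ / _) => ht.
  apply: (Hl sigma Hf t); exists x; split.
    by move=> i hi; have [] := Hx i hi.
  by rewrite -ht addrC subrK.
move=> Hf [x [Hx Hsum]]; apply: Hf.
exists (fun i => f (x i)); split.
  by move=> i hi; exists (x i); split => //; apply: Hx.
by rewrite Hsum fsum.
Qed.
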